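(* For every $t\in[0,1)$ the operator $C_t\colon H(\mathbb{D})\to H(\mathbb{D})$ is continuous. Moreover, the set $\{C_t : t\in[0,1)\}$ is equicontinuous in $\mathcal{L}(H(\mathbb{D}))$.
   Context: $\mathbb{D}=\{z\in\mathbb{C}:|z|<1\}$ and $H(\mathbb{D})$ is the space of holomorphic functions on $\mathbb{D}$ endowed with the topology of uniform convergence on compact subsets of $\mathbb{D}$ (a Fréchet space). $\mathcal{L}(H(\mathbb{D}))$ denotes the continuous linear operators on $H(\mathbb{D})$. For $t\in[0,1]$ the generalized Cesàro operator $C_t$ is defined on $f\in H(\mathbb{D})$ by $C_tf(0)=f(0)$ and $C_tf(z)=\frac{1}{z}\int_0^z\frac{f(\xi)}{1-t\xi}\,d\xi$ for $z\in\mathbb{D}\setminus\{0\}$. *)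

(* Defs.v *)
From Stdlib Require Import Reals.
From Coquelicot Require Import Coquelicot.
Open Scope R_scope.

Definition in_disc (z : C) : Prop := Cmod z < 1.

Definition holo_disc (f : C -> C) : Prop :=
  forall z : C, in_disc z ->
    @ex_derive C_AbsRing C_NormedModule f z.

(* line integral of g along the segment [0, z]:
   int_0^z g(xi) dxi = int_0^1 g(s z) z ds *)
Definition seg_integral (g : C -> C) (z : C) : C :=
  @RInt C_R_CompleteNormedModule (fun s : R => Cmult z (g (RtoC s * z)%C)) 0 1.

Definition cesaro (t : R) (f : C -> C) (z : C) : C :=
  if Req_EM_T (Cmod z) 0 then f 0%C
  else (/ z * seg_integral (fun xi => f xi / (1 - RtoC t * xi)) z)%C.

(* Topology of uniform convergence on compact subsets of D on H(D):
   every compact subset of D lies in a closed disc {|z| <= r}, r < 1,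
   so a set V is a neighbourhood of f in H(D) iff it contains, for some
   0 <= r < 1 and eps > 0, all g in H(D) with sup_{|z|<=r} |g z - f z| <= eps. *)
Definition hd_nbhd (f : C -> C) (V : (C -> C) -> Prop) : Prop :=
  exists r eps : R, 0 <= r < 1 /\ 0 < eps /\
    forall g : C -> C, holo_disc g ->
      (forall z : C, Cmod z <= r -> Cmod (g z - f z)%C <= eps) -> V g.

Definition maps_HD (T : (C -> C) -> (C -> C)) : Prop :=
  forall f, holo_disc f -> holo_disc (T f).

Definition linear_HD (T : (C -> C) -> (C -> C)) : Prop :=
  (forall f g, holo_disc f -> holo_disc g -> forall z, in_disc z ->
     T (fun w => f w + g w)%C z = (T f z + T g z)%C) /\
  (forall (a : C) f, holo_disc f -> forall z, in_disc z ->
     T (fun w => a * f w)%C z = (a * T f z)%C).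

Definition continuous_HD (T : (C -> C) -> (C -> C)) : Prop :=
  forall f, holo_disc f -> forall V, hd_nbhd (T f) V ->
    exists U, hd_nbhd f U /\ forall g, holo_disc g -> U g -> V (T g).

Definition equicontinuous_HD (I : Type) (P : I -> Prop)
    (T : I -> (C -> C) -> (C -> C)) : Prop :=
  forall V, hd_nbhd (fun _ => 0%C) V ->
    exists U, hd_nbhd (fun _ => 0%C) U /\
      forall i g, P i -> holo_disc g -> U g -> V (T i g).

(* Main.v *)
Require Import Defs.
From Stdlib Require Import Reals Lra Lia.
From Coquelicot Require Import Coquelicot.
Open Scope R_scope.

Lemma normCR (x : C) : @norm R_AbsRing C_R_NormedModule x = Cmod x.
Proof.
  destruct x as [a b]. unfold norm; simpl. unfold prod_norm, Cmod; simpl.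
  change (@norm R_AbsRing R_NormedModule a) with (Rabs a).
  change (@norm R_AbsRing R_NormedModule b) with (Rabs b).
  rewrite !Rmult_1_r, <- !Rabs_mult, !Rabs_pos_eq; try nra; reflexivity.
Qed.

Lemma is_RInt_C_pair (f : R -> C) a b (I : C) :
  is_RInt (fun s => Re (f s)) a b (Re I) -> is_RInt (fun s => Im (f s)) a b (Im I) ->
  @is_RInt C_R_NormedModule f a b I.
Proof.
  intros H1 H2. destruct I as [i1 i2].
  apply (@is_RInt_fct_extend_pair R_NormedModule R_NormedModule f a b i1 i2); assumption.
Qed.

Lemma is_RInt_C_re (f : R -> C) a b (I : C) :
  @is_RInt C_R_NormedModule f a b I -> is_RInt (fun s => Re (f s)) a b (Re I).
Proof. intros H. exact (@is_RInt_fct_extend_fst R_NormedModule R_NormedModule f a b I H). Qed.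
Lemma is_RInt_C_im (f : R -> C) a b (I : C) :
  @is_RInt C_R_NormedModule f a b I -> is_RInt (fun s => Im (f s)) a b (Im I).
Proof. intros H. exact (@is_RInt_fct_extend_snd R_NormedModule R_NormedModule f a b I H). Qed.

Lemma is_RInt_Cmult (f : R -> C) a b (I c : C) :
  @is_RInt C_R_NormedModule f a b I ->
  @is_RInt C_R_NormedModule (fun s => (c * f s)%C) a b (c * I)%C.
Proof.
  intros H. pose proof (is_RInt_C_re _ _ _ _ H) as H1. pose proof (is_RInt_C_im _ _ _ _ H) as H2.
  apply is_RInt_C_pair.
  - pose proof (@is_RInt_minus R_NormedModule _ _ a b _ _ (@is_RInt_scal R_NormedModule _ a b (Re c) _ H1) (@is_RInt_scal R_NormedModule _ a b (Im c) _ H2)) as K.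
    eapply is_RInt_ext; [|exact K]. intros x _. simpl. unfold minus, plus, opp, scal; simpl.
    unfold mult, Re, Im; simpl. ring.
  - pose proof (@is_RInt_plus R_NormedModule _ _ a b _ _ (@is_RInt_scal R_NormedModule _ a b (Re c) _ H2) (@is_RInt_scal R_NormedModule _ a b (Im c) _ H1)) as K.
    eapply is_RInt_ext; [|exact K]. intros x _. simpl. unfold minus, plus, opp, scal; simpl.
    unfold mult, Re, Im; simpl. ring.
Qed.

Lemma is_derive_C_intro (f : C -> C) z l :
  (forall e, 0 < e -> exists d, 0 < d /\ forall y, Cmod (y - z) < d ->
     Cmod (f y - f z - (y - z) * l) <= e * Cmod (y - z)) ->
  @is_derive C_AbsRing C_NormedModule f z l.
Proof.
  intros H. split.
  - apply is_linear_scal_l.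
  - intros x Hx. apply (@is_filter_lim_locally_unique C_AbsRing (AbsRing_NormedModule C_AbsRing)) in Hx. subst x.
    intros eps. destruct (H eps (cond_pos eps)) as [d [Hd H']].
    exists (mkposreal d Hd). intros y Hy. apply H'. exact Hy.
Qed.

Lemma is_derive_C_elim (f : C -> C) z l :
  @is_derive C_AbsRing C_NormedModule f z l ->
  (forall e, 0 < e -> exists d, 0 < d /\ forall y, Cmod (y - z) < d ->
     Cmod (f y - f z - (y - z) * l) <= e * Cmod (y - z)).
Proof.
  intros [_ H] e He. specialize (H z (fun P HP => HP)).
  destruct (H (mkposreal e He)) as [d Hd].
  exists d. split. apply cond_pos. intros y Hy. apply Hd. exact Hy.
Qed.

Definition ccont (h : C -> C) z := forall e, 0 < e -> exists d, 0 < d /\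
  forall y, Cmod (y - z) < d -> Cmod (h y - h z) < e.

Lemma ex_derive_ccont (h : C -> C) z :
  @ex_derive C_AbsRing C_NormedModule h z -> ccont h z.
Proof.
  intros [l Hl] e He.
  destruct (is_derive_C_elim _ _ _ Hl 1 Rlt_0_1) as [d1 [Hd1 H1]].
  assert (Hl0 := Cmod_ge_0 l).
  exists (Rmin d1 (e / (1 + Cmod l))). split.
  { apply Rmin_pos; auto. apply Rdiv_lt_0_compat; lra. }
  intros y Hy.
  assert (Hy1 : Cmod (y - z) < d1) by (eapply Rlt_le_trans; [exact Hy| apply Rmin_l]).
  assert (Hy2 : Cmod (y - z) < e / (1 + Cmod l)) by (eapply Rlt_le_trans; [exact Hy| apply Rmin_r]).
  specialize (H1 y Hy1).
  replace (h y - h z)%C with ((h y - h z - (y - z) * l) + (y - z) * l)%C by ring.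
  eapply Rle_lt_trans. apply Cmod_triangle. rewrite Cmod_mult.
  assert (Hyz := Cmod_ge_0 (y - z)).
  apply (Rmult_lt_compat_r (1 + Cmod l)) in Hy2; [|lra].
  unfold Rdiv in Hy2. rewrite Rmult_assoc, Rinv_l, Rmult_1_r in Hy2 by lra.
  nra.
Qed.

Lemma ex_RInt_C (g : R -> C) a b : a <= b ->
  (forall s, a <= s <= b -> forall e, 0 < e -> exists d, 0 < d /\
     forall x, Rabs (x - s) < d -> Cmod (g x - g s) < e) ->
  @ex_RInt C_R_NormedModule g a b.
Proof.
  intros Hab H. apply (@ex_RInt_continuous C_R_CompleteNormedModule).
  intros z Hz. rewrite Rmin_left, Rmax_right in Hz by exact Hab.
  apply filterlim_locally. intros eps.
  destruct (H z Hz eps (cond_pos eps)) as [d [Hd H']].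
  exists (mkposreal d Hd). intros x Hx. apply (@norm_compat1 R_AbsRing C_R_NormedModule).
  rewrite normCR. apply H'. exact Hx.
Qed.

Definition segf (h : C -> C) (a b : C) : R -> C :=
  fun s => ((b - a) * h (a + RtoC s * (b - a)))%C.
Definition seg (h : C -> C) (a b : C) : C :=
  @RInt C_R_CompleteNormedModule (segf h a b) 0 1.

Lemma Cmod_convex (a b : C) rho s : Cmod a <= rho -> Cmod b <= rho -> 0 <= s <= 1 ->
  Cmod (a + RtoC s * (b - a)) <= rho.
Proof.
  intros Ha Hb Hs.
  replace (a + RtoC s * (b - a))%C with (RtoC (1 - s) * a + RtoC s * b)%C
    by (rewrite RtoC_minus; ring).
  eapply Rle_trans. apply Cmod_triangle. rewrite !Cmod_mult, !Cmod_R.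
  rewrite !Rabs_pos_eq by lra. nra.
Qed.

Lemma segf_cont (h : C -> C) a b s :
  ccont h (a + RtoC s * (b - a))%C ->
  forall e, 0 < e -> exists d, 0 < d /\
     forall x, Rabs (x - s) < d -> Cmod (segf h a b x - segf h a b s) < e.
Proof.
  intros Hc e He. set (M := Cmod (b - a)). assert (HM : 0 <= M) by apply Cmod_ge_0.
  destruct (Hc (e / (M + 1))) as [d [Hd H]]. { apply Rdiv_lt_0_compat; lra. }
  exists (d / (M + 1)). split. { apply Rdiv_lt_0_compat; lra. }
  intros x Hx. unfold segf.
  replace ((b - a) * h (a + RtoC x * (b - a)) - (b - a) * h (a + RtoC s * (b - a)))%C
    with ((b - a) * (h (a + RtoC x * (b - a)) - h (a + RtoC s * (b - a))))%C by ring.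
  rewrite Cmod_mult. fold M.
  assert (Hq : Cmod (h (a + RtoC x * (b - a))%C - h (a + RtoC s * (b - a))%C) < e / (M + 1)).
  assert (Hq0 := Cmod_ge_0 (h (a + RtoC x * (b - a))%C - h (a + RtoC s * (b - a))%C)).
  { apply H.
    replace (a + RtoC x * (b - a) - (a + RtoC s * (b - a)))%C with (RtoC (x - s) * (b - a))%C
      by (rewrite RtoC_minus; ring).
    rewrite Cmod_mult, Cmod_R. fold M.
    apply (Rmult_lt_compat_r (M + 1)) in Hx; [|lra].
    unfold Rdiv in Hx. rewrite Rmult_assoc, Rinv_l, Rmult_1_r in Hx by lra.
    assert (0 <= Rabs (x - s)) by apply Rabs_pos. nra. }
  assert (e / (M + 1) * (M + 1) = e) by (field; lra).
  nra.
Qed.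

Lemma segf_ex (h : C -> C) a b rho x y :
  rho < 1 -> (forall z, Cmod z < 1 -> ccont h z) ->
  Cmod a <= rho -> Cmod b <= rho -> 0 <= x -> x <= y -> y <= 1 ->
  @ex_RInt C_R_NormedModule (segf h a b) x y.
Proof.
  intros Hr Hc Ha Hb H1 H2 H3. apply ex_RInt_C; auto.
  intros s Hs. apply segf_cont. apply Hc.
  eapply Rle_lt_trans; [|exact Hr]. apply Cmod_convex; auto; lra.
Qed.

Ltac toC := match goal with |- ?A = ?B => change (@eq C A B) end.

Lemma RtoC_m1 : RtoC (-1) = (- 1)%C.
Proof. unfold RtoC, Copp; simpl; f_equal; ring. Qed.

Definition mid (a b : C) : C := ((a + b) / 2)%C.

Section Seg.
Variable h : C -> C.
Variable rho : R.
Hypothesis Hrho : rho < 1.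
Hypothesis Hc : forall z, Cmod z < 1 -> ccont h z.

Lemma seg_rev a b : Cmod a <= rho -> Cmod b <= rho -> seg h a b = (- seg h b a)%C.
Proof.
  intros Ha Hb. unfold seg.
  assert (Hex : @ex_RInt C_R_NormedModule (segf h b a) 0 1) by (eapply segf_ex; eauto; lra).
  assert (Hex' : @ex_RInt C_R_NormedModule (segf h b a) (-1 * 0 + 1) (-1 * 1 + 1)).
  { replace (-1 * 0 + 1) with 1 by ring. replace (-1 * 1 + 1) with 0 by ring.
    apply ex_RInt_swap. exact Hex. }
  pose proof (RInt_comp_lin (V := C_R_CompleteNormedModule) (segf h b a) (-1) 1 0 1 Hex') as E.
  replace (-1 * 0 + 1) with 1 in E by ring. replace (-1 * 1 + 1) with 0 in E by ring.
  rewrite <- (opp_RInt_swap (V := C_R_CompleteNormedModule) (segf h b a) 0 1 Hex) in E.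
  etransitivity; [|exact E].
  apply (RInt_ext (V := C_R_CompleteNormedModule)). intros x _.
  transitivity (RtoC (-1) * segf h b a (-1 * x + 1))%C; [|symmetry; apply scal_R_Cmult].
  unfold segf.
  replace (b + RtoC (-1 * x + 1) * (a - b))%C with (a + RtoC x * (b - a))%C.
  2:{ replace (-1 * x + 1) with (1 - x) by ring. rewrite RtoC_minus. ring. }
  toC; ring.
Qed.

Lemma seg_split a b : Cmod a <= rho -> Cmod b <= rho ->
  seg h a b = (seg h a (mid a b) + seg h (mid a b) b)%C.
Proof.
  intros Ha Hb. unfold seg.
  rewrite <- (RInt_Chasles (V := C_R_CompleteNormedModule) (segf h a b) 0 (1/2) 1)
    by (eapply segf_ex; eauto; lra).
  assert (E1 : @RInt C_R_CompleteNormedModule (segf h a (mid a b)) 0 1 =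
               @RInt C_R_CompleteNormedModule (segf h a b) 0 (1/2)).
  { pose proof (RInt_comp_lin (V := C_R_CompleteNormedModule) (segf h a b) (1/2) 0 0 1) as E.
    replace (1/2 * 0 + 0) with 0 in E by ring. replace (1/2 * 1 + 0) with (1/2) in E by ring.
    rewrite <- E by (eapply segf_ex; eauto; lra).
    apply (RInt_ext (V := C_R_CompleteNormedModule)). intros x _.
    transitivity (RtoC (1/2) * segf h a b (1/2 * x + 0))%C; [|symmetry; apply scal_R_Cmult].
    unfold segf, mid.
    replace (a + RtoC (1/2 * x + 0) * (b - a))%C with (a + RtoC x * ((a + b) / 2 - a))%C.
    2:{ rewrite RtoC_plus, RtoC_mult. rewrite RtoC_div by lra. field. }
    rewrite RtoC_div by lra. toC; field. }
  assert (E2 : @RInt C_R_CompleteNormedModule (segf h (mid a b) b) 0 1 =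
               @RInt C_R_CompleteNormedModule (segf h a b) (1/2) 1).
  { pose proof (RInt_comp_lin (V := C_R_CompleteNormedModule) (segf h a b) (1/2) (1/2) 0 1) as E.
    replace (1/2 * 0 + 1/2) with (1/2) in E by ring. replace (1/2 * 1 + 1/2) with 1 in E by field.
    rewrite <- E by (eapply segf_ex; eauto; lra).
    apply (RInt_ext (V := C_R_CompleteNormedModule)). intros x _.
    transitivity (RtoC (1/2) * segf h a b (1/2 * x + 1/2))%C; [|symmetry; apply scal_R_Cmult].
    unfold segf, mid.
    replace (a + RtoC (1/2 * x + 1/2) * (b - a))%C with ((a + b) / 2 + RtoC x * (b - (a + b) / 2))%C.
    2:{ rewrite RtoC_plus, RtoC_mult. rewrite RtoC_div by lra. field. }
    rewrite RtoC_div by lra. toC; field. }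
  rewrite E1, E2. reflexivity.
Qed.

End Seg.

Lemma is_RInt_affR (c0 c1 : R) :
  is_RInt (fun s => c0 + s * c1) 0 1 (c0 + c1 / 2).
Proof.
  assert (H := @is_RInt_derive R_CompleteNormedModule (fun s => c0 * s + c1 * (s * s) / 2)
                 (fun s => c0 + s * c1) 0 1).
  replace (c0 + c1 / 2) with (minus (c0 * 1 + c1 * (1 * 1) / 2) (c0 * 0 + c1 * (0 * 0) / 2)).
  2:{ unfold minus, plus, opp; simpl. field. }
  apply H.
  - intros x _. auto_derive; auto. field.
  - intros x _. apply (ex_derive_continuous (K := R_AbsRing) (V := R_NormedModule)). auto_derive; auto.
Qed.

Lemma is_RInt_affC (c0 c1 : C) :
  @is_RInt C_R_NormedModule (fun s => (c0 + RtoC s * c1)%C) 0 1 (c0 + c1 / 2)%C.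
Proof.
  assert (E : (c0 + c1 / 2)%C = (Re c0 + Re c1 / 2, Im c0 + Im c1 / 2)).
  { destruct c0 as [x0 y0], c1 as [x1 y1]. unfold Cplus, Cdiv, Cmult, Cinv, Re, Im; simpl.
    f_equal; field. }
  rewrite E. apply is_RInt_C_pair; simpl.
  - eapply is_RInt_ext; [|apply (is_RInt_affR (Re c0) (Re c1))].
    intros x _. destruct c0, c1. unfold Re, RtoC; simpl. ring.
  - eapply is_RInt_ext; [|apply (is_RInt_affR (Im c0) (Im c1))].
    intros x _. destruct c0, c1. unfold Im, RtoC; simpl. ring.
Qed.

Definition linv (al be a b : C) : C := ((b - a) * (al + be * a) + be * (b - a) * (b - a) / 2)%C.

Lemma seg_lin_is (al be a b : C) :
  @is_RInt C_R_NormedModule (segf (fun xi => al + be * xi)%C a b) 0 1 (linv al be a b).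
Proof.
  eapply is_RInt_ext; [|apply (is_RInt_affC ((b - a) * (al + be * a)) (be * (b - a) * (b - a)))].
  intros x _. unfold segf. toC. ring.
Qed.

Lemma linv_tri al be a b c : (linv al be a b + linv al be b c + linv al be c a = 0)%C.
Proof. unfold linv. field. Qed.

Lemma seg_approx (h L : C -> C) a b V M :
  @ex_RInt C_R_NormedModule (segf h a b) 0 1 ->
  @is_RInt C_R_NormedModule (segf L a b) 0 1 V ->
  (forall s, 0 <= s <= 1 -> Cmod (h (a + RtoC s * (b - a))%C - L (a + RtoC s * (b - a))%C) <= M) ->
  Cmod (seg h a b - V) <= Cmod (b - a) * M.
Proof.
  intros Hh HL HM.
  pose proof (RInt_correct (V := C_R_CompleteNormedModule) _ _ _ Hh) as Hh'.
  pose proof (is_RInt_minus _ _ 0 1 _ _ Hh' HL) as K.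
  assert (B : @norm R_AbsRing C_R_NormedModule (minus (@RInt C_R_CompleteNormedModule (segf h a b) 0 1) V) <= (1 - 0) * (Cmod (b - a) * M)).
  { apply (norm_RInt_le_const (fun y => minus (segf h a b y) (segf L a b y)) 0 1 _ _ Rle_0_1); [|exact K].
    intros s Hs. rewrite normCR. unfold segf.
    change (minus ((b - a) * h (a + RtoC s * (b - a)))%C ((b - a) * L (a + RtoC s * (b - a)))%C)
      with ((b - a) * h (a + RtoC s * (b - a)) - (b - a) * L (a + RtoC s * (b - a)))%C.
    replace ((b - a) * h (a + RtoC s * (b - a)) - (b - a) * L (a + RtoC s * (b - a)))%C
      with ((b - a) * (h (a + RtoC s * (b - a)) - L (a + RtoC s * (b - a))))%C by ring.
    rewrite Cmod_mult. apply Rmult_le_compat_l. apply Cmod_ge_0. apply HM. exact Hs. }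
  rewrite normCR in B.
  change (Cmod (seg h a b - V) <= (1 - 0) * (Cmod (b - a) * M)) in B.
  lra.
Qed.

Lemma Cmod_sym (x y : C) : Cmod (x - y) = Cmod (y - x).
Proof. rewrite <- Cmod_opp. f_equal. toC. ring. Qed.

Lemma Cmod_div2 (x : C) : Cmod (x / 2) = Cmod x / 2.
Proof.
  rewrite Cmod_div. rewrite Cmod_R, Rabs_pos_eq by lra. reflexivity.
  intro H. injection H. lra.
Qed.

Lemma Cmod_half_eq (u w : C) : (u = w / 2)%C -> Cmod u = Cmod w / 2.
Proof. intros ->. apply Cmod_div2. Qed.

Lemma Cmod_mid rho a b : Cmod a <= rho -> Cmod b <= rho -> Cmod (mid a b) <= rho.
Proof.
  intros Ha Hb. replace (mid a b) with (a + RtoC (1/2) * (b - a))%C.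
  apply Cmod_convex; auto; lra.
  unfold mid. rewrite RtoC_div by lra. toC. field.
Qed.

Definition tri := (C * C * C)%type.
Definition Tri (h : C -> C) (T : tri) : C :=
  let '(a, b, c) := T in (seg h a b + seg h b c + seg h c a)%C.
Definition per (T : tri) : R :=
  let '(a, b, c) := T in Cmod (b - a) + Cmod (c - b) + Cmod (a - c).
Definition vin (rho : R) (T : tri) : Prop :=
  let '(a, b, c) := T in Cmod a <= rho /\ Cmod b <= rho /\ Cmod c <= rho.
Definition fst3 (T : tri) : C := let '(a, _, _) := T in a.

Definition sub0 (T : tri) : tri := let '(a, b, c) := T in (a, mid a b, mid c a).
Definition sub1 (T : tri) : tri := let '(a, b, c) := T in (mid a b, b, mid b c).
Definition sub2 (T : tri) : tri := let '(a, b, c) := T in (mid c a, mid b c, c).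
Definition sub3 (T : tri) : tri := let '(a, b, c) := T in (mid a b, mid b c, mid c a).

Definition best (h : C -> C) (T1 T2 : tri) : tri :=
  if Rle_dec (Cmod (Tri h T1)) (Cmod (Tri h T2)) then T2 else T1.
Definition pick (h : C -> C) (T : tri) : tri :=
  best h (best h (sub0 T) (sub1 T)) (best h (sub2 T) (sub3 T)).

Lemma best_l h T1 T2 : Cmod (Tri h T1) <= Cmod (Tri h (best h T1 T2)).
Proof. unfold best. destruct Rle_dec; lra. Qed.
Lemma best_r h T1 T2 : Cmod (Tri h T2) <= Cmod (Tri h (best h T1 T2)).
Proof. unfold best. destruct Rle_dec; lra. Qed.
Lemma best_cases (P : tri -> Prop) h T1 T2 : P T1 -> P T2 -> P (best h T1 T2).
Proof. unfold best. destruct Rle_dec; auto. Qed.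

Lemma pick_cases (P : tri -> Prop) h T :
  P (sub0 T) -> P (sub1 T) -> P (sub2 T) -> P (sub3 T) -> P (pick h T).
Proof. intros. unfold pick. repeat apply best_cases; auto. Qed.

Lemma sub_vin rho T : vin rho T ->
  vin rho (sub0 T) /\ vin rho (sub1 T) /\ vin rho (sub2 T) /\ vin rho (sub3 T).
Proof.
  destruct T as [[a b] c]. simpl. intros [Ha [Hb Hc]].
  repeat split; auto; apply Cmod_mid; auto.
Qed.

Lemma pick_vin rho h T : vin rho T -> vin rho (pick h T).
Proof. intros H. destruct (sub_vin rho T H) as [? [? [? ?]]]. apply pick_cases; auto. Qed.

Ltac hq u w := rewrite (Cmod_half_eq u w) by (toC; field).

Lemma sub_per T :
  per (sub0 T) = per T / 2 /\ per (sub1 T) = per T / 2 /\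
  per (sub2 T) = per T / 2 /\ per (sub3 T) = per T / 2.
Proof.
  destruct T as [[a b] c]. simpl. unfold mid.
  repeat split.
  - hq ((a + b) / 2 - a)%C (b - a)%C. hq ((c + a) / 2 - (a + b) / 2)%C (c - b)%C.
    hq (a - (c + a) / 2)%C (a - c)%C. lra.
  - hq (b - (a + b) / 2)%C (b - a)%C. hq ((b + c) / 2 - b)%C (c - b)%C.
    hq ((a + b) / 2 - (b + c) / 2)%C (a - c)%C. lra.
  - hq ((b + c) / 2 - (c + a) / 2)%C (b - a)%C. hq (c - (b + c) / 2)%C (c - b)%C.
    hq ((c + a) / 2 - c)%C (a - c)%C. lra.
  - hq ((b + c) / 2 - (a + b) / 2)%C (c - a)%C. hq ((c + a) / 2 - (b + c) / 2)%C (a - b)%C.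
    hq ((a + b) / 2 - (c + a) / 2)%C (b - c)%C.
    rewrite (Cmod_sym c a), (Cmod_sym a b), (Cmod_sym b c). lra.
Qed.

Lemma pick_per h T : per (pick h T) = per T / 2.
Proof. destruct (sub_per T) as [? [? [? ?]]]. apply pick_cases; auto. Qed.

Lemma per_ge0 T : 0 <= per T.
Proof.
  destruct T as [[a b] c]. simpl.
  pose proof (Cmod_ge_0 (b - a)). pose proof (Cmod_ge_0 (c - b)). pose proof (Cmod_ge_0 (a - c)). lra.
Qed.

Lemma pick_fst h T : Cmod (fst3 (pick h T) - fst3 T) <= per T.
Proof.
  pose proof (per_ge0 T).
  destruct T as [[a b] c]. apply pick_cases; simpl in *; unfold mid.
  - replace (a - a)%C with (RtoC 0) by (toC; ring). rewrite Cmod_0. lra.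
  - hq ((a + b) / 2 - a)%C (b - a)%C.
    pose proof (Cmod_ge_0 (b - a)). pose proof (Cmod_ge_0 (c - b)). pose proof (Cmod_ge_0 (a - c)). lra.
  - hq ((c + a) / 2 - a)%C (c - a)%C. rewrite (Cmod_sym c a).
    pose proof (Cmod_ge_0 (b - a)). pose proof (Cmod_ge_0 (c - b)). pose proof (Cmod_ge_0 (a - c)). lra.
  - hq ((a + b) / 2 - a)%C (b - a)%C.
    pose proof (Cmod_ge_0 (b - a)). pose proof (Cmod_ge_0 (c - b)). pose proof (Cmod_ge_0 (a - c)). lra.
Qed.

Section Goursat.
Variable h : C -> C.
Hypothesis Hd : forall z, Cmod z < 1 -> @ex_derive C_AbsRing C_NormedModule h z.

Lemma Hcc : forall z, Cmod z < 1 -> ccont h z.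
Proof. intros z Hz. apply ex_derive_ccont, Hd, Hz. Qed.

Variable rho : R.
Hypothesis Hrho : rho < 1.

Lemma Tri_decomp T : vin rho T ->
  Tri h T = (Tri h (sub0 T) + Tri h (sub1 T) + Tri h (sub2 T) + Tri h (sub3 T))%C.
Proof.
  destruct T as [[a b] c]. simpl. intros [Ha [Hb Hc]].
  assert (Hab := Cmod_mid rho a b Ha Hb).
  assert (Hbc := Cmod_mid rho b c Hb Hc).
  assert (Hca := Cmod_mid rho c a Hc Ha).
  rewrite (seg_split h rho Hrho Hcc a b) by auto.
  rewrite (seg_split h rho Hrho Hcc b c) by auto.
  rewrite (seg_split h rho Hrho Hcc c a) by auto.
  rewrite (seg_rev h rho Hrho Hcc (mid c a) (mid a b)) by auto.
  rewrite (seg_rev h rho Hrho Hcc (mid b c) (mid a b)) by auto.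
  rewrite (seg_rev h rho Hrho Hcc (mid b c) (mid c a)) by auto.
  ring.
Qed.

Lemma Tri_pick T : vin rho T -> Cmod (Tri h T) <= 4 * Cmod (Tri h (pick h T)).
Proof.
  intros HT. rewrite (Tri_decomp T HT).
  assert (H0 : Cmod (Tri h (sub0 T)) <= Cmod (Tri h (pick h T))).
  { unfold pick. eapply Rle_trans; [apply best_l|]. apply best_l. }
  assert (H1 : Cmod (Tri h (sub1 T)) <= Cmod (Tri h (pick h T))).
  { unfold pick. eapply Rle_trans; [apply best_r|]. apply best_l. }
  assert (H2 : Cmod (Tri h (sub2 T)) <= Cmod (Tri h (pick h T))).
  { unfold pick. eapply Rle_trans; [apply best_l|]. apply best_r. }
  assert (H3 : Cmod (Tri h (sub3 T)) <= Cmod (Tri h (pick h T))).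
  { unfold pick. eapply Rle_trans; [apply best_r|]. apply best_r. }
  eapply Rle_trans. apply Cmod_triangle.
  eapply Rle_trans. apply Rplus_le_compat_r. apply Cmod_triangle.
  eapply Rle_trans. apply Rplus_le_compat_r. apply Rplus_le_compat_r. apply Cmod_triangle.
  lra.
Qed.

Fixpoint tseq (T0 : tri) (n : nat) : tri :=
  match n with O => T0 | S m => pick h (tseq T0 m) end.

Lemma tseq_props T0 : vin rho T0 -> forall n,
  vin rho (tseq T0 n) /\ per (tseq T0 n) = per T0 * (/ 2) ^ n /\
  Cmod (Tri h T0) <= 4 ^ n * Cmod (Tri h (tseq T0 n)).
Proof.
  intros H0. induction n as [|n [IH1 [IH2 IH3]]]; simpl.
  - repeat split; auto; lra.
  - split; [apply pick_vin; auto|]. split.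
    + rewrite pick_per, IH2. field.
    + pose proof (Tri_pick _ IH1). assert (P4 : 0 <= 4 ^ n) by (apply pow_le; lra).
      apply Rle_trans with (4 ^ n * (4 * Cmod (Tri h (pick h (tseq T0 n))))); [|lra].
      eapply Rle_trans; [exact IH3|]. apply Rmult_le_compat_l; auto.
Qed.

Lemma tseq_step T0 : vin rho T0 -> forall n,
  Cmod (fst3 (tseq T0 (S n)) - fst3 (tseq T0 n)) <= per T0 * (/ 2) ^ n.
Proof.
  intros H0 n. simpl. destruct (tseq_props T0 H0 n) as [_ [E _]]. rewrite <- E. apply pick_fst.
Qed.

Lemma tseq_cauchy T0 : vin rho T0 -> forall n k,
  Cmod (fst3 (tseq T0 (n + k)) - fst3 (tseq T0 n)) <= 2 * per T0 * (/ 2) ^ n - 2 * per T0 * (/ 2) ^ (n + k).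
Proof.
  intros H0 n k. induction k as [|k IH].
  - rewrite Nat.add_0_r. replace (fst3 (tseq T0 n) - fst3 (tseq T0 n))%C with (RtoC 0) by (toC; ring).
    rewrite Cmod_0. lra.
  - rewrite Nat.add_succ_r.
    replace (fst3 (tseq T0 (S (n + k))) - fst3 (tseq T0 n))%C with
      ((fst3 (tseq T0 (S (n + k))) - fst3 (tseq T0 (n + k))) + (fst3 (tseq T0 (n + k)) - fst3 (tseq T0 n)))%C
      by (toC; ring).
    eapply Rle_trans. apply Cmod_triangle.
    pose proof (tseq_step T0 H0 (n + k)).
    replace (2 * per T0 * (/ 2) ^ S (n + k)) with (per T0 * (/ 2) ^ (n + k)) by (simpl; field). lra.
Qed.


Lemma small_pow K e : 0 < e -> exists N, forall n, (n >= N)%nat -> K * (/ 2) ^ n < e.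
Proof.
  intros He.
  assert (Hh : Rabs (/ 2) < 1) by (rewrite Rabs_pos_eq; lra).
  assert (HK := Rabs_pos K).
  destruct (pow_lt_1_zero (/ 2) Hh (e / (Rabs K + 1))) as [N HN].
  { apply Rdiv_lt_0_compat; lra. }
  exists N. intros n Hn. specialize (HN n Hn).
  assert (P0 : 0 <= (/ 2) ^ n) by (apply pow_le; lra).
  rewrite Rabs_pos_eq in HN by exact P0.
  apply Rle_lt_trans with (Rabs K * (/ 2) ^ n).
  { apply Rmult_le_compat_r; auto. apply Rle_abs. }
  apply Rle_lt_trans with (Rabs K * (e / (Rabs K + 1))).
  { apply Rmult_le_compat_l; lra. }
  apply Rmult_lt_reg_r with (Rabs K + 1); [lra|].
  assert (e / (Rabs K + 1) * (Rabs K + 1) = e) by (field; lra). nra.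
Qed.

Lemma lim_bound (u : nat -> R) l c B n :
  Un_cv u l -> (forall m, (m >= n)%nat -> Rabs (u m - c) <= B) -> Rabs (l - c) <= B.
Proof.
  intros Hu HB. apply Rnot_lt_le. intros Hlt.
  destruct (Hu (Rabs (l - c) - B)) as [N HN]; [lra|].
  specialize (HN (Nat.max N n) (Nat.le_max_l _ _)). unfold Rdist in HN.
  specialize (HB (Nat.max N n) (Nat.le_max_r _ _)).
  assert (Rabs (l - c) <= Rabs (u (Nat.max N n) - l) + Rabs (u (Nat.max N n) - c)).
  { replace (l - c) with (- (u (Nat.max N n) - l) + (u (Nat.max N n) - c)) by ring.
    eapply Rle_trans. apply Rabs_triang. rewrite Rabs_Ropp. lra. }
  lra.
Qed.

Lemma ReIm_le (x y : C) : Rabs (fst x - fst y) <= Cmod (x - y) /\ Rabs (snd x - snd y) <= Cmod (x - y).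
Proof.
  destruct x as [a b], y as [c d]. pose proof (Rmax_Cmod ((a, b) - (c, d))%C) as H.
  simpl in H. unfold Rminus. split; (eapply Rle_trans; [|exact H]); [apply Rmax_l|apply Rmax_r].
Qed.

Lemma vin_fst T : vin rho T -> Cmod (fst3 T) <= rho.
Proof. destruct T as [[a b] c]; simpl; tauto. Qed.

Lemma limit_point T0 : vin rho T0 -> exists p : C,
  forall n, Cmod (p - fst3 (tseq T0 n)) <= 4 * per T0 * (/ 2) ^ n.
Proof.
  intros H0. set (P := per T0). assert (HP : 0 <= P) by apply per_ge0.
  set (a := fun n => fst3 (tseq T0 n)).
  assert (Hclose : forall n m, (n <= m)%nat -> Cmod (a m - a n) <= 2 * P * (/ 2) ^ n).
  { intros n m Hnm. replace m with (n + (m - n))%nat by lia.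
    pose proof (tseq_cauchy T0 H0 n (m - n)).
    assert (0 <= (/ 2) ^ (n + (m - n))) by (apply pow_le; lra).
    unfold a, P. pose proof (per_ge0 T0). nra. }
  assert (Hcc2 : forall (f : C -> R), (forall x y : C, Rabs (f x - f y) <= Cmod (x - y)) ->
     { l | Un_cv (fun n => f (a n)) l /\ forall n, Rabs (l - f (a n)) <= 2 * P * (/ 2) ^ n }).
  { intros f Hf.
    assert (Cau : Cauchy_crit (fun n => f (a n))).
    { intros eps Heps. destruct (small_pow (4 * P) eps Heps) as [N HN].
      exists N. intros n m Hn Hm. unfold Rdist.
      specialize (HN N (le_n N)).
      assert (E1 := Hf (a n) (a N)). assert (E2 := Hf (a m) (a N)).
      assert (F1 := Hclose N n Hn). assert (F2 := Hclose N m Hm).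
      replace (f (a n) - f (a m)) with ((f (a n) - f (a N)) - (f (a m) - f (a N))) by ring.
      eapply Rle_lt_trans. apply Rabs_triang. rewrite Rabs_Ropp. lra. }
    destruct (Rcomplete.R_complete _ Cau) as [l Hl].
    exists l. split; auto. intros n.
    apply (lim_bound (fun n => f (a n)) l (f (a n)) _ n Hl).
    intros m Hm. eapply Rle_trans. apply Hf. apply Hclose. lia. }
  destruct (Hcc2 fst (fun x y => proj1 (ReIm_le x y))) as [lu [_ Hu]].
  destruct (Hcc2 snd (fun x y => proj2 (ReIm_le x y))) as [lv [_ Hv]].
  exists (lu, lv). intros n.
  eapply Rle_trans. apply Cmod_2Rmax.
  assert (Hs : sqrt 2 <= 2).
  { rewrite <- (sqrt_square 2) at 2 by lra. apply sqrt_le_1_alt. lra. }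
  assert (Hm : Rmax (Rabs (fst ((lu, lv) - fst3 (tseq T0 n))%C)) (Rabs (snd ((lu, lv) - fst3 (tseq T0 n))%C))
               <= 2 * P * (/ 2) ^ n).
  { apply Rmax_lub.
    - specialize (Hu n). unfold a in Hu. destruct (fst3 (tseq T0 n)) as [x y]. simpl in *. exact Hu.
    - specialize (Hv n). unfold a in Hv. destruct (fst3 (tseq T0 n)) as [x y]. simpl in *. exact Hv. }
  assert (0 <= Rmax (Rabs (fst ((lu, lv) - fst3 (tseq T0 n))%C)) (Rabs (snd ((lu, lv) - fst3 (tseq T0 n))%C))).
  { eapply Rle_trans; [|apply Rmax_l]. apply Rabs_pos. }
  assert (0 <= sqrt 2) by apply sqrt_pos.
  nra.
Qed.


Lemma side_near (x y a' : C) s : 0 <= s <= 1 ->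
  Cmod (x + RtoC s * (y - x) - a') <= Cmod (x - a') + Cmod (y - x).
Proof.
  intros Hs. replace (x + RtoC s * (y - x) - a')%C with ((x - a') + RtoC s * (y - x))%C by (toC; ring).
  eapply Rle_trans. apply Cmod_triangle. rewrite Cmod_mult, Cmod_R, Rabs_pos_eq by lra.
  pose proof (Cmod_ge_0 (y - x)). nra.
Qed.

Lemma side_est (p d : C) eps delta x y a' D :
  (forall xi, Cmod (xi - p) < delta -> Cmod (h xi - h p - (xi - p) * d) <= eps * Cmod (xi - p)) ->
  Cmod x <= rho -> Cmod y <= rho -> Cmod (p - a') <= 4 * D ->
  Cmod (x - a') + Cmod (y - x) <= 2 * D -> 6 * D < delta -> 0 < eps ->
  Cmod (seg h x y - linv (h p - p * d) d x y) <= Cmod (y - x) * (eps * (6 * D)).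
Proof.
  intros Hder Hx Hy Hp Hxy HD He.
  apply (seg_approx h (fun xi => (h p - p * d) + d * xi)%C).
  - eapply segf_ex; eauto using Hcc; lra.
  - apply seg_lin_is.
  - intros s Hs. set (xi := (x + RtoC s * (y - x))%C).
    assert (Hn : Cmod (xi - p) <= 6 * D).
    { replace (xi - p)%C with ((xi - a') - (p - a'))%C by (toC; ring).
      eapply Rle_trans. unfold Cminus at 1. eapply Rle_trans. apply Cmod_triangle. rewrite Cmod_opp. apply Rle_refl.
      pose proof (side_near x y a' s Hs). fold xi in H. lra. }
    specialize (Hder xi ltac:(lra)).
    replace (h xi - (h p - p * d + d * xi))%C with (h xi - h p - (xi - p) * d)%C by (toC; ring).
    eapply Rle_trans. exact Hder. apply Rmult_le_compat_l; lra.
Qed.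

Lemma pow4_half n : 4 ^ n * ((/ 2) ^ n * (/ 2) ^ n) = 1.
Proof. induction n; simpl. ring. replace (4 * 4 ^ n * (/ 2 * (/ 2) ^ n * (/ 2 * (/ 2) ^ n))) with (4 ^ n * ((/ 2) ^ n * (/ 2) ^ n)) by field. exact IHn. Qed.

Theorem goursat T0 : vin rho T0 -> Tri h T0 = 0%C.
Proof.
  intros H0. destruct (limit_point T0 H0) as [p Hp].
  set (P := per T0). assert (HP : 0 <= P) by apply per_ge0.
  assert (Hpr : Cmod p <= rho).
  { apply Rnot_lt_le. intros Hlt.
    destruct (small_pow (4 * P) (Cmod p - rho)) as [N HN]; [lra|].
    specialize (HN N (le_n N)). specialize (Hp N).
    destruct (tseq_props T0 H0 N) as [Hv _].
    pose proof (vin_fst _ Hv).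
    assert (E : p = ((p - fst3 (tseq T0 N)) + fst3 (tseq T0 N))%C) by (toC; ring).
    assert (Cmod p <= Cmod (p - fst3 (tseq T0 N)) + Cmod (fst3 (tseq T0 N))).
    { rewrite E at 1. apply Cmod_triangle. }
    unfold P in HN. lra. }
  destruct (Hd p ltac:(lra)) as [d Hder].
  assert (Heps : forall eps, 0 < eps -> Cmod (Tri h T0) <= eps * (6 * (P * P))).
  { intros eps He. destruct (is_derive_C_elim _ _ _ Hder eps He) as [delta [Hdel Hdd]].
    destruct (small_pow (6 * P) delta Hdel) as [n Hn]. specialize (Hn n (le_n n)).
    destruct (tseq_props T0 H0 n) as [Hv [Hper HT]].
    specialize (Hp n).
    set (D := P * (/ 2) ^ n) in *.
    assert (HD0 : 0 <= D) by (unfold D; apply Rmult_le_pos; auto; apply pow_le; lra).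
    destruct (tseq T0 n) as [[a b] c] eqn:En.
    simpl in Hv, Hper, Hp. destruct Hv as [Ha [Hb Hc]].
    change (per T0) with P in Hper, Hp. fold D in Hper, Hp, Hn.
    assert (Hab : Cmod (b - a) <= D) by (pose proof (Cmod_ge_0 (c - b)); pose proof (Cmod_ge_0 (a - c)); fold P in Hper; lra).
    assert (Hbc : Cmod (c - b) <= D) by (pose proof (Cmod_ge_0 (b - a)); pose proof (Cmod_ge_0 (a - c)); fold P in Hper; lra).
    assert (Hca : Cmod (a - c) <= D) by (pose proof (Cmod_ge_0 (b - a)); pose proof (Cmod_ge_0 (c - b)); fold P in Hper; lra).
    assert (Haa : Cmod (a - a) = 0) by (replace (a - a)%C with (RtoC 0) by (toC; ring); apply Cmod_0).
    assert (Hp4 : Cmod (p - a) <= 4 * D) by (unfold D; lra).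
    assert (Hdelta : 6 * D < delta) by (unfold D; lra).
    set (al := (h p - p * d)%C).
    assert (S1 := side_est p d eps delta a b a D Hdd Ha Hb Hp4 ltac:(lra) Hdelta He).
    assert (S2 := side_est p d eps delta b c a D Hdd Hb Hc Hp4 ltac:(lra) Hdelta He).
    assert (S3 := side_est p d eps delta c a a D Hdd Hc Ha Hp4 ltac:(rewrite (Cmod_sym c a); lra) Hdelta He).
    fold al in S1, S2, S3.
    assert (Hsum : Cmod (Tri h (a, b, c)) <= (Cmod (b - a) + Cmod (c - b) + Cmod (a - c)) * (eps * (6 * D))).
    { simpl.
      replace (seg h a b + seg h b c + seg h c a)%C with
        ((seg h a b - linv al d a b) + (seg h b c - linv al d b c) + (seg h c a - linv al d c a)
         + (linv al d a b + linv al d b c + linv al d c a))%C by (toC; ring).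
      rewrite linv_tri. rewrite Cplus_0_r.
      eapply Rle_trans. apply Cmod_triangle.
      eapply Rle_trans. apply Rplus_le_compat_r. apply Cmod_triangle. lra. }
    rewrite Hper in Hsum. fold P D in Hsum.
    assert (P4 : 0 <= 4 ^ n) by (apply pow_le; lra).
    eapply Rle_trans. exact HT.
    eapply Rle_trans. apply Rmult_le_compat_l. exact P4. exact Hsum.
    replace (4 ^ n * (D * (eps * (6 * D)))) with (eps * (6 * (P * P)) * (4 ^ n * ((/ 2) ^ n * (/ 2) ^ n))) by (unfold D; ring).
    rewrite pow4_half. lra. }
  assert (Hz : Cmod (Tri h T0) <= 0).
  { apply Rnot_lt_le. intros Hlt.
    specialize (Heps (Cmod (Tri h T0) / (2 * (6 * (P * P)) + 1))).
    assert (0 <= P * P) by nra.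
    assert (Hq : 0 < Cmod (Tri h T0) / (2 * (6 * (P * P)) + 1)) by (apply Rdiv_lt_0_compat; lra).
    specialize (Heps Hq).
    assert (Cmod (Tri h T0) / (2 * (6 * (P * P)) + 1) * (2 * (6 * (P * P)) + 1) = Cmod (Tri h T0)) by (field; lra).
    nra. }
  apply Cmod_eq_0. pose proof (Cmod_ge_0 (Tri h T0)). lra.
Qed.

End Goursat.

Lemma G_deriv (h : C -> C) :
  (forall z, Cmod z < 1 -> @ex_derive C_AbsRing C_NormedModule h z) ->
  forall w, Cmod w < 1 -> @is_derive C_AbsRing C_NormedModule (fun z => seg h 0 z) w (h w).
Proof.
  intros Hd w Hw. apply is_derive_C_intro. intros e He.
  destruct (Hcc h Hd w Hw e He) as [d1 [Hd1 H1]].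
  exists (Rmin d1 ((1 - Cmod w) / 2)). split.
  { apply Rmin_pos; lra. }
  intros z Hz.
  assert (Hz1 : Cmod (z - w) < d1) by (eapply Rlt_le_trans; [exact Hz|apply Rmin_l]).
  assert (Hz2 : Cmod (z - w) < (1 - Cmod w) / 2) by (eapply Rlt_le_trans; [exact Hz|apply Rmin_r]).
  set (rho := (1 + Cmod w) / 2).
  assert (Hrho : rho < 1) by (unfold rho; lra).
  assert (Hwr : Cmod w <= rho) by (unfold rho; lra).
  assert (Hzr : Cmod z <= rho).
  { replace z with ((z - w) + w)%C by (toC; ring).
    eapply Rle_trans. apply Cmod_triangle. unfold rho; lra. }
  assert (H0r : Cmod 0 <= rho) by (rewrite Cmod_0; pose proof (Cmod_ge_0 w); lra).
  assert (Hg := goursat h Hd rho Hrho ((RtoC 0, w, z) : tri) (conj H0r (conj Hwr Hzr))).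
  simpl in Hg.
  rewrite (seg_rev h rho Hrho (Hcc h Hd) z 0) in Hg by auto.
  assert (E : (seg h 0 z - seg h 0 w - (z - w) * h w = seg h w z - linv (h w) 0 w z)%C).
  { assert (E0 : seg h 0 z = (seg h 0 w + seg h w z)%C).
    { transitivity (seg h 0 z + (seg h 0 w + seg h w z + - seg h 0 z))%C.
      rewrite Hg. toC; ring. toC; ring. }
    rewrite E0. unfold linv. field. }
  rewrite E. rewrite Rmult_comm.
  apply (seg_approx h (fun xi => h w + 0 * xi)%C).
  - eapply segf_ex; eauto using Hcc; lra.
  - apply seg_lin_is.
  - intros s Hs.
    replace (h (w + RtoC s * (z - w))%C - (h w + 0 * (w + RtoC s * (z - w))))%C
      with (h (w + RtoC s * (z - w))%C - h w)%C by (toC; ring).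
    apply Rlt_le. apply H1.
    replace (w + RtoC s * (z - w) - w)%C with (RtoC s * (z - w))%C by (toC; ring).
    rewrite Cmod_mult, Cmod_R, Rabs_pos_eq by lra.
    pose proof (Cmod_ge_0 (z - w)). nra.
Qed.

Lemma inv_deriv (w : C) : w <> 0%C ->
  @is_derive C_AbsRing C_NormedModule Cinv w (- / (w * w))%C.
Proof.
  intros Hw. apply is_derive_C_intro. intros e He.
  assert (HW : 0 < Cmod w) by (apply Cmod_gt_0; exact Hw).
  set (W := Cmod w) in *.
  exists (Rmin (W / 2) (e * (W * W * W) / 2)). split.
  { apply Rmin_pos. lra. apply Rdiv_lt_0_compat; [|lra]. apply Rmult_lt_0_compat; [exact He|]. apply Rmult_lt_0_compat; [apply Rmult_lt_0_compat|]; exact HW. }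
  intros y Hy.
  assert (Hy1 : Cmod (y - w) < W / 2) by (eapply Rlt_le_trans; [exact Hy|apply Rmin_l]).
  assert (Hy2 : Cmod (y - w) < e * (W * W * W) / 2) by (eapply Rlt_le_trans; [exact Hy|apply Rmin_r]).
  assert (HY : W / 2 < Cmod y).
  { assert (W <= Cmod (w - y) + Cmod y).
    { unfold W. replace w with ((w - y) + y)%C at 1 by (toC; ring). apply Cmod_triangle. }
    rewrite Cmod_sym in H. lra. }
  assert (Hy0 : y <> 0%C) by (intro E; rewrite E, Cmod_0 in HY; lra).
  replace (/ y - / w - (y - w) * - / (w * w))%C with ((y - w) * (y - w) / (y * (w * w)))%C
    by (toC; field; auto).
  rewrite Cmod_div by (apply Cmult_neq_0; auto; apply Cmult_neq_0; auto).
  rewrite !Cmod_mult. fold W.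
  set (a := Cmod (y - w)) in *. set (Y := Cmod y) in *.
  assert (Ha : 0 <= a) by apply Cmod_ge_0.
  apply Rle_div_l. { apply Rmult_lt_0_compat; [lra|]. nra. }
  assert (a * a <= a * (e * (W * W * W) / 2)) by (apply Rmult_le_compat_l; lra).
  assert (a * (e * (W * W * W) / 2) <= e * a * (Y * (W * W))).
  { assert (0 <= e * a * (W * W)) by (apply Rmult_le_pos; [nra|nra]).
    assert (e * a * (W * W) * (W / 2) <= e * a * (W * W) * Y) by (apply Rmult_le_compat_l; lra).
    nra. }
  lra.
Qed.

Lemma conv_AN (f : C -> C) z l : @is_derive C_AbsRing C_NormedModule f z l ->
  @is_derive C_AbsRing (AbsRing_NormedModule C_AbsRing) f z l.
Proof.
  intros [_ H]. split. apply is_linear_scal_l.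
  intros x Hx eps. specialize (H x Hx eps). exact H.
Qed.
Lemma conv_NA (f : C -> C) z l : @is_derive C_AbsRing (AbsRing_NormedModule C_AbsRing) f z l ->
  @is_derive C_AbsRing C_NormedModule f z l.
Proof.
  intros [_ H]. split. apply is_linear_scal_l.
  intros x Hx eps. specialize (H x Hx eps). exact H.
Qed.

Definition hq (t : R) (f : C -> C) : C -> C := fun xi => (f xi / (1 - RtoC t * xi))%C.

Lemma q_nz t xi : 0 <= t < 1 -> Cmod xi < 1 -> (1 - RtoC t * xi)%C <> 0%C.
Proof.
  intros Ht Hx E.
  assert (E' : RtoC 1 = (RtoC t * xi)%C) by (transitivity ((1 - RtoC t * xi) + RtoC t * xi)%C; [toC; ring | rewrite E; toC; ring]).
  apply (f_equal Cmod) in E'. rewrite Cmod_mult, Cmod_R, Cmod_R, Rabs_R1, Rabs_pos_eq in E' by lra.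
  pose proof (Cmod_ge_0 xi). nra.
Qed.

Lemma holo_hq t f : 0 <= t < 1 -> holo_disc f ->
  forall z, Cmod z < 1 -> @ex_derive C_AbsRing C_NormedModule (hq t f) z.
Proof.
  intros Ht Hf z Hz.
  destruct (Hf z Hz) as [df Hdf].
  set (q := fun xi : C => (1 - RtoC t * xi)%C).
  assert (Hq : @is_derive C_AbsRing C_NormedModule q z (- RtoC t)%C).
  { apply is_derive_C_intro. intros e He. exists 1. split; [lra|]. intros y _.
    unfold q. replace (1 - RtoC t * y - (1 - RtoC t * z) - (y - z) * - RtoC t)%C with (RtoC 0) by (toC; ring).
    rewrite Cmod_0. pose proof (Cmod_ge_0 (y - z)). nra. }
  assert (Hi := inv_deriv (q z) (q_nz t z Ht Hz)).
  assert (Hc := is_derive_comp Cinv q z _ _ Hi (conv_AN _ _ _ Hq)).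
  assert (Hm := is_derive_mult f (fun x => Cinv (q x)) z _ _ (conv_AN _ _ _ Hdf) (conv_AN _ _ _ Hc) Cmult_comm).
  eexists. apply conv_NA. eapply is_derive_ext; [|exact Hm]. intros x. reflexivity.
Qed.

Lemma seg_integral_eq g z : seg_integral g z = seg g 0 z.
Proof.
  unfold seg_integral, seg. apply (RInt_ext (V := C_R_CompleteNormedModule)). intros x _.
  unfold segf. replace (0 + RtoC x * (z - 0))%C with (RtoC x * z)%C by (toC; ring).
  toC; ring.
Qed.

Lemma cesaro_nz (t : R) (f : C -> C) (z : C) : z <> 0%C -> cesaro t f z = (/ z * seg (hq t f) 0 z)%C.
Proof.
  intros Hz. unfold cesaro. destruct (Req_EM_T (Cmod z) 0) as [E|E].
  - apply Cmod_eq_0 in E. contradiction.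
  - rewrite seg_integral_eq. reflexivity.
Qed.

Lemma cesaro_0 t f : cesaro t f 0%C = f 0%C.
Proof.
  unfold cesaro. destruct (Req_EM_T (Cmod 0) 0) as [E|E]; [reflexivity|].
  rewrite Cmod_0 in E. lra.
Qed.

Lemma hq_0 t f : hq t f 0%C = f 0%C.
Proof. unfold hq. replace (1 - RtoC t * 0)%C with (RtoC 1) by (toC; ring). toC; field. Qed.

Lemma cesaro_holo t f : 0 <= t < 1 -> holo_disc f -> holo_disc (cesaro t f).
Proof.
  intros Ht Hf z Hz.
  set (h := hq t f). assert (Hd : forall z, Cmod z < 1 -> @ex_derive C_AbsRing C_NormedModule h z)
    by (apply holo_hq; auto).
  destruct (Ceq_dec z 0) as [Ez|Ez].
  - subst z. assert (H0 : Cmod (RtoC 0) < 1) by (rewrite Cmod_0; lra).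
    destruct (Hd _ H0) as [d Hder].
    exists (d / 2)%C. apply is_derive_C_intro. intros e He.
    destruct (is_derive_C_elim _ _ _ Hder e He) as [delta [Hdel Hdd]].
    exists (Rmin delta 1). split. { apply Rmin_pos; lra. }
    intros y Hy.
    assert (Hy1 : Cmod (y - 0) < delta) by (eapply Rlt_le_trans; [exact Hy|apply Rmin_l]).
    assert (Hy2 : Cmod (y - 0) < 1) by (eapply Rlt_le_trans; [exact Hy|apply Rmin_r]).
    replace (y - 0)%C with y in Hy1, Hy2 |- * by (toC; ring).
    destruct (Ceq_dec y 0) as [Ey|Ey].
    + subst y. replace (cesaro t f 0 - cesaro t f 0 - 0 * (d / 2))%C with (RtoC 0) by (toC; ring).
      rewrite Cmod_0. lra.
    + rewrite cesaro_nz by exact Ey. rewrite cesaro_0. rewrite <- (hq_0 t f). fold h.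
      replace (/ y * seg h 0 y - h 0 - y * (d / 2))%C with (/ y * (seg h 0 y - linv (h 0) d 0 y))%C
        by (unfold linv; toC; field; exact Ey).
      rewrite Cmod_mult, Cmod_inv by exact Ey.
      assert (HY : 0 < Cmod y) by (apply Cmod_gt_0; exact Ey).
      assert (B : Cmod (seg h 0 y - linv (h 0) d 0 y) <= Cmod (y - 0) * (e * Cmod y)).
      { apply (seg_approx h (fun xi => h 0 + d * xi)%C).
        - apply (segf_ex h 0 y (Cmod y)); auto using Hcc; try lra. rewrite Cmod_0; lra.
        - apply seg_lin_is.
        - intros s Hs.
          assert (Hxi : Cmod (0 + RtoC s * (y - 0))%C <= Cmod y).
          { replace (0 + RtoC s * (y - 0))%C with (RtoC s * y)%C by (toC; ring).
            rewrite Cmod_mult, Cmod_R, Rabs_pos_eq by lra. nra. }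
          replace (h (0 + RtoC s * (y - 0))%C - (h 0 + d * (0 + RtoC s * (y - 0))))%C
            with (h (0 + RtoC s * (y - 0))%C - h 0 - ((0 + RtoC s * (y - 0)) - 0) * d)%C by (toC; ring).
          eapply Rle_trans. apply Hdd.
          + replace ((0 + RtoC s * (y - 0)) - 0)%C with (0 + RtoC s * (y - 0))%C by (toC; ring). lra.
          + replace ((0 + RtoC s * (y - 0)) - 0)%C with (0 + RtoC s * (y - 0))%C by (toC; ring).
            apply Rmult_le_compat_l; lra. }
      replace (y - 0)%C with y in B by (toC; ring).
      apply Rle_trans with (/ Cmod y * (Cmod y * (e * Cmod y))).
      { apply Rmult_le_compat_l; [|exact B]. left. apply Rinv_0_lt_compat. exact HY. }
      right. field. lra.
  - assert (G := G_deriv h Hd z Hz).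
    assert (Hi := inv_deriv z Ez).
    assert (Hm := is_derive_mult Cinv (fun x => seg h 0 x) z _ _ (conv_AN _ _ _ Hi) (conv_AN _ _ _ G) Cmult_comm).
    eexists. apply conv_NA. eapply is_derive_ext_loc; [|exact Hm].
    assert (HZ : 0 < Cmod z) by (apply Cmod_gt_0; exact Ez).
    exists (mkposreal _ HZ). intros y Hy. change C in y. simpl in Hy. unfold ball in Hy. simpl in Hy.
    unfold AbsRing_ball in Hy. change (Cmod (y - z) < Cmod z) in Hy.
    assert (Ey : y <> 0%C).
    { intros E. rewrite E in Hy. replace (0 - z)%C with (- z)%C in Hy by (toC; ring).
      rewrite Cmod_opp in Hy. lra. }
    rewrite cesaro_nz by exact Ey. reflexivity.
Qed.

Lemma q_low t xi r : 0 <= t < 1 -> 0 <= r < 1 -> Cmod xi <= r -> 1 - r <= Cmod (1 - RtoC t * xi)%C.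
Proof.
  intros Ht Hr Hx.
  assert (E : Cmod (RtoC 1) <= Cmod (1 - RtoC t * xi)%C + Cmod (RtoC t * xi)%C).
  { replace (RtoC 1) with ((1 - RtoC t * xi) + RtoC t * xi)%C at 1 by (toC; ring). apply Cmod_triangle. }
  rewrite Cmod_mult, !Cmod_R, Rabs_R1, Rabs_pos_eq in E by lra.
  pose proof (Cmod_ge_0 xi). nra.
Qed.

Lemma ces_diff t r f g M z : 0 <= t < 1 -> 0 <= r < 1 -> holo_disc f -> holo_disc g ->
  (forall xi, Cmod xi <= r -> Cmod (g xi - f xi)%C <= M) -> Cmod z <= r ->
  Cmod (cesaro t g z - cesaro t f z)%C <= M / (1 - r).
Proof.
  intros Ht Hr Hf Hg HM Hz.
  assert (HM0 : 0 <= M).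
  { eapply Rle_trans; [apply Cmod_ge_0|]. apply (HM 0%C). rewrite Cmod_0. lra. }
  assert (HMr : M <= M / (1 - r)).
  { apply Rle_div_r; [lra|]. nra. }
  destruct (Ceq_dec z 0) as [Ez|Ez].
  - subst z. rewrite !cesaro_0. eapply Rle_trans; [|exact HMr]. apply HM. rewrite Cmod_0; lra.
  - rewrite !cesaro_nz by exact Ez.
    replace (/ z * seg (hq t g) 0 z - / z * seg (hq t f) 0 z)%C
      with (/ z * (seg (hq t g) 0 z - seg (hq t f) 0 z))%C by (toC; ring).
    rewrite Cmod_mult, Cmod_inv by exact Ez.
    assert (HZ : 0 < Cmod z) by (apply Cmod_gt_0; exact Ez).
    assert (Hz1 : Cmod z < 1) by lra.
    assert (H0z : Cmod (RtoC 0) <= Cmod z) by (rewrite Cmod_0; lra).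
    assert (B : Cmod (seg (hq t g) 0 z - seg (hq t f) 0 z) <= Cmod (z - 0) * (M / (1 - r))).
    { apply (seg_approx (hq t g) (hq t f)).
      - apply (segf_ex _ 0 z (Cmod z)); auto; try lra. intros w Hw. apply Hcc; auto. apply holo_hq; auto.
      - apply (RInt_correct (V := C_R_CompleteNormedModule)).
        apply (segf_ex _ 0 z (Cmod z)); auto; try lra. intros w Hw. apply Hcc; auto. apply holo_hq; auto.
      - intros s Hs. set (xi := (0 + RtoC s * (z - 0))%C).
        assert (Hxi : Cmod xi <= r).
        { eapply Rle_trans; [|exact Hz]. apply Cmod_convex; [exact H0z | apply Rle_refl | exact Hs]. }
        assert (Hq := q_low t xi r Ht Hr Hxi).
        assert (Hq0 : (1 - RtoC t * xi)%C <> 0%C) by (apply q_nz; auto; lra).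
        unfold hq.
        replace (g xi / (1 - RtoC t * xi) - f xi / (1 - RtoC t * xi))%C
          with ((g xi - f xi) / (1 - RtoC t * xi))%C by (toC; field; exact Hq0).
        rewrite Cmod_div by exact Hq0.
        specialize (HM xi Hxi).
        unfold Rdiv. apply Rmult_le_compat; auto.
        + apply Cmod_ge_0.
        + left. apply Rinv_0_lt_compat. lra.
        + apply Rinv_le_contravar; lra. }
    replace (z - 0)%C with z in B by (toC; ring).
    apply Rle_trans with (/ Cmod z * (Cmod z * (M / (1 - r)))).
    { apply Rmult_le_compat_l; [|exact B]. left. apply Rinv_0_lt_compat. exact HZ. }
    right. field. lra.
Qed.

Lemma holo_zero : holo_disc (fun _ => 0%C).
Proof. intros z _. exists (RtoC 0). apply is_derive_C_intro. intros e He. exists 1. split; [lra|].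
  intros y _. replace (0 - 0 - (y - z) * 0)%C with (RtoC 0) by (toC; ring). rewrite Cmod_0.
  pose proof (Cmod_ge_0 (y - z)). nra. Qed.

Lemma cesaro_zero t z : 0 <= t < 1 -> Cmod z < 1 -> cesaro t (fun _ => 0%C) z = 0%C.
Proof.
  intros Ht Hz. destruct (Ceq_dec z 0) as [Ez|Ez].
  - subst z. rewrite cesaro_0. reflexivity.
  - rewrite cesaro_nz by exact Ez.
    assert (H0z : Cmod (RtoC 0) <= Cmod z) by (rewrite Cmod_0; apply Cmod_ge_0).
    assert (B : Cmod (seg (hq t (fun _ => 0%C)) 0 z - linv 0 0 0 z) <= Cmod (z - 0) * 0).
    { apply (seg_approx _ (fun xi => 0 + 0 * xi)%C).
      - apply (segf_ex _ 0 z (Cmod z)); auto; try lra. intros w Hw. apply Hcc; auto.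
        apply holo_hq; auto. apply holo_zero.
      - apply seg_lin_is.
      - intros s Hs. unfold hq. replace (0 / (1 - RtoC t * (0 + RtoC s * (z - 0))) - (0 + 0 * (0 + RtoC s * (z - 0))))%C
          with (RtoC 0) by (toC; unfold Cdiv; ring). rewrite Cmod_0. lra. }
    rewrite Rmult_0_r in B.
    assert (E : (seg (hq t (fun _ => 0%C)) 0 z - linv 0 0 0 z)%C = 0%C).
    { apply Cmod_eq_0. pose proof (Cmod_ge_0 (seg (hq t (fun _ => 0%C)) 0 z - linv 0 0 0 z)). lra. }
    assert (E2 : seg (hq t (fun _ => 0%C)) 0 z = 0%C).
    { transitivity ((seg (hq t (fun _ => 0%C)) 0 z - linv 0 0 0 z) + linv 0 0 0 z)%C; [toC; ring|].
      rewrite E. unfold linv. toC; field. }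
    rewrite E2. toC; ring.
Qed.

Lemma segf_hq_ex t f z : 0 <= t < 1 -> holo_disc f -> Cmod z < 1 ->
  @ex_RInt C_R_NormedModule (segf (hq t f) 0 z) 0 1.
Proof.
  intros Ht Hf Hz. apply (segf_ex _ 0 z (Cmod z)); auto; try lra.
  - intros w Hw. apply Hcc; auto. apply holo_hq; auto.
  - rewrite Cmod_0. apply Cmod_ge_0.
Qed.

Lemma cesaro_linear t : 0 <= t < 1 -> linear_HD (cesaro t).
Proof.
  intros Ht. split.
  - intros f g Hf Hg z Hz. destruct (Ceq_dec z 0) as [Ez|Ez].
    + subst z. rewrite !cesaro_0. reflexivity.
    + rewrite !cesaro_nz by exact Ez.
      assert (E : seg (hq t (fun w => f w + g w)%C) 0 z = (seg (hq t f) 0 z + seg (hq t g) 0 z)%C).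
      { unfold seg.
        rewrite <- (RInt_plus (V := C_R_CompleteNormedModule)) by (apply segf_hq_ex; auto).
        apply (RInt_ext (V := C_R_CompleteNormedModule)). intros x _. unfold segf, hq.
        change (plus ?u ?v) with (Cplus u v). toC. unfold Cdiv. ring. }
      rewrite E. toC. ring.
  - intros a f Hf z Hz. destruct (Ceq_dec z 0) as [Ez|Ez].
    + subst z. rewrite !cesaro_0. reflexivity.
    + rewrite !cesaro_nz by exact Ez.
      assert (E : seg (hq t (fun w => a * f w)%C) 0 z = (a * seg (hq t f) 0 z)%C).
      { unfold seg.
        rewrite <- (is_RInt_unique (V := C_R_CompleteNormedModule) _ _ _ _
                      (is_RInt_Cmult _ _ _ _ a (RInt_correct (V := C_R_CompleteNormedModule) _ _ _ (segf_hq_ex t f z Ht Hf Hz)))).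
        apply (RInt_ext (V := C_R_CompleteNormedModule)). intros x _. unfold segf, hq.
        toC. unfold Cdiv. ring. }
      rewrite E. toC. ring.
Qed.

Theorem proposition2p1 :
  (forall t : R, 0 <= t < 1 ->
     maps_HD (cesaro t) /\ linear_HD (cesaro t) /\ continuous_HD (cesaro t)) /\
  equicontinuous_HD R (fun t : R => 0 <= t < 1) cesaro.
Proof.
  split.
  - intros t Ht. split; [|split].
    + intros f Hf. apply cesaro_holo; auto.
    + apply cesaro_linear; auto.
    + intros f Hf V [r [eps [Hr [He HV]]]].
      exists (fun g => forall z, Cmod z <= r -> Cmod (g z - f z)%C <= eps * (1 - r)).
      split.
      * exists r, (eps * (1 - r)). split; [auto|]. split; [apply Rmult_lt_0_compat; lra|].
        intros g _ Hg. exact Hg.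
      * intros g Hg HU. apply HV. apply cesaro_holo; auto.
        intros z Hz. eapply Rle_trans. apply (ces_diff t r f g (eps * (1 - r)) z); auto.
        right. field. lra.
  - intros V [r [eps [Hr [He HV]]]].
    exists (fun g => forall z, Cmod z <= r -> Cmod (g z - 0)%C <= eps * (1 - r)).
    split.
    + exists r, (eps * (1 - r)). split; [auto|]. split; [apply Rmult_lt_0_compat; lra|].
      intros g _ Hg. exact Hg.
    + intros t g Ht Hg HU. apply HV. apply cesaro_holo; auto.
      intros z Hz.
      rewrite <- (cesaro_zero t z Ht) by lra.
      eapply Rle_trans. apply (ces_diff t r (fun _ => 0%C) g (eps * (1 - r)) z); auto.
      apply holo_zero.
      right. field. lra.
Qed.
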